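(* Let $M(C,\bar\xi,\pi)$ be a Myller configuration with Darboux frame $(\bar\xi,\bar\mu,\bar v)$ and invariants $G,K,T$ such that $(G(s),K(s))\neq(0,0)$ for all $s$, and suppose $C$ is a $\bar\xi$-helix in $M$ with fixed unit axis $\bar d_\xi$ and constant angle $\theta$, $\langle\bar\xi,\bar d_\xi\rangle=\cos\theta$. Then, for one choice of sign $\epsilon\in\{1,-1\}$, $$\bar d_\xi=(\cos\theta)\bar\xi-\epsilon\sin\theta\frac{K}{\sqrt{G^2+K^2}}\bar\mu+\epsilon\sin\theta\frac{G}{\sqrt{G^2+K^2}}\bar v .$$
   Context: Let $C$ be a smooth curve in Euclidean 3-space $E^3$ parametrized by arclength $s$; primes denote $d/ds$. A Myller configuration $M(C,\bar\xi,\pi)$ consists of a smooth unit vector field $\bar\xi(s)$ along $C$ and a smooth field of oriented planes $\pi(s)$ with $\bar\xi(s)\in\pi(s)$. Let $\bar v(s)$ be the unit normal of $\pi(s)$ and $\bar\mu=\bar v\times\bar\xi$. The Darboux frame $(\bar\xi,\bar\mu,\bar v)$ is positively oriented orthonormal with $\bar\xi'=G\bar\mu+K\bar v$, $\bar\mu'=-G\bar\xi+T\bar v$, $\bar v'=-K\bar\xi-T\bar\mu$ ($G,K,T$: geodesic curvature, normal curvature, geodesic torsion). $C$ is a $\bar\xi$-helix in $M$ if there are a constant unit vector $\bar d_\xi$ (the axis) and a constant $\theta$ with $\langle\bar\xi,\bar d_\xi\rangle=\cos\theta$ along $C$. *)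

(* Defs.v *)
From Stdlib Require Import Reals.
From Coquelicot Require Import Coquelicot.
Open Scope R_scope.

Record vec3 := V3 { vx : R ; vy : R ; vz : R }.

Definition vadd (u w : vec3) : vec3 := V3 (vx u + vx w) (vy u + vy w) (vz u + vz w).
Definition vscal (c : R) (u : vec3) : vec3 := V3 (c * vx u) (c * vy u) (c * vz u).
Definition dot (u w : vec3) : R := vx u * vx w + vy u * vy w + vz u * vz w.
Definition cross (u w : vec3) : vec3 :=
  V3 (vy u * vz w - vz u * vy w) (vz u * vx w - vx u * vz w) (vx u * vy w - vy u * vx w).

Definition smooth_on (a b : R) (f : R -> R) : Prop :=
  forall (n : nat) (s : R), a < s < b -> ex_derive (Derive_n f n) s.

Definition vsmooth_on (a b : R) (f : R -> vec3) : Prop :=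
  smooth_on a b (fun t => vx (f t)) /\ smooth_on a b (fun t => vy (f t)) /\
  smooth_on a b (fun t => vz (f t)).

Definition vis_derive (f : R -> vec3) (s : R) (df : vec3) : Prop :=
  is_derive (fun t => vx (f t)) s (vx df) /\ is_derive (fun t => vy (f t)) s (vy df) /\
  is_derive (fun t => vz (f t)) s (vz df).

(* Darboux frame (xi, mu, nu) of a Myller configuration along a curve
   parametrized by arclength s in (a,b), with invariants G, K, T. *)
Definition darboux_frame (a b : R) (xi mu nu : R -> vec3) (G K T : R -> R) : Prop :=
  vsmooth_on a b xi /\ vsmooth_on a b mu /\ vsmooth_on a b nu /\
  smooth_on a b G /\ smooth_on a b K /\ smooth_on a b T /\
  (forall s, a < s < b ->
     dot (xi s) (xi s) = 1 /\ dot (nu s) (nu s) = 1 /\ dot (xi s) (nu s) = 0 /\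
     mu s = cross (nu s) (xi s)) /\
  (forall s, a < s < b ->
     vis_derive xi s (vadd (vscal (G s) (mu s)) (vscal (K s) (nu s))) /\
     vis_derive mu s (vadd (vscal (- G s) (xi s)) (vscal (T s) (nu s))) /\
     vis_derive nu s (vadd (vscal (- K s) (xi s)) (vscal (- T s) (mu s)))).

Definition xi_helix (a b : R) (xi : R -> vec3) (d : vec3) (theta : R) : Prop :=
  dot d d = 1 /\ forall s, a < s < b -> dot (xi s) d = cos theta.

(* Main.v *)
Require Import Defs.
From Stdlib Require Import Reals Lra Psatz.
From Coquelicot Require Import Coquelicot.
Open Scope R_scope.

Lemma der_mulc (u : R -> R) s du c :
  is_derive u s du -> is_derive (fun t => u t * c) s (du * c).
Proof.
  intro H. apply (is_derive_ext (fun t => c * u t)).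
  { intro t. apply Rmult_comm. }
  replace (du * c) with (c * du) by ring. now apply is_derive_scal.
Qed.

Lemma der_add (u v : R -> R) s du dv :
  is_derive u s du -> is_derive v s dv -> is_derive (fun t => u t + v t) s (du + dv).
Proof. intros H1 H2. exact (is_derive_plus u v s du dv H1 H2). Qed.

Lemma der_dot (f : R -> vec3) s df d :
  vis_derive f s df -> is_derive (fun t => dot (f t) d) s (dot df d).
Proof.
  intros [H1 [H2 H3]]. unfold dot.
  apply der_add; [apply der_add|]; apply der_mulc; assumption.
Qed.

Lemma der_cont (u : R -> R) s du : is_derive u s du -> continuity_pt u s.
Proof.
  intro H. apply continuity_pt_filterlim. apply (ex_derive_continuous (K:=R_AbsRing) (V:=R_NormedModule)). now exists du.
Qed.

Lemma sm_cont a b u s : smooth_on a b u -> a < s < b -> continuity_pt u s.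
Proof.
  intros H Hs. destruct (H 0%nat s Hs) as [l Hl]. now apply (der_cont _ _ l).
Qed.

Lemma sign_const (f : R -> R) x y : x < y ->
  (forall z, x <= z <= y -> continuity_pt f z) ->
  (forall z, x <= z <= y -> f z <> 0) -> f x * f y > 0.
Proof.
  intros Hxy Hc Hn.
  assert (Hx : f x <> 0) by (apply Hn; lra).
  assert (Hy : f y <> 0) by (apply Hn; lra).
  destruct (Rlt_or_le (f x) 0) as [Hx1|Hx1]; destruct (Rlt_or_le (f y) 0) as [Hy1|Hy1].
  - nra.
  - exfalso. destruct (Ranalysis5.IVT_interv f x y Hc Hxy Hx1 ltac:(lra)) as [z [Hz Hz0]].
    exact (Hn z Hz Hz0).
  - exfalso. destruct (Ranalysis5.IVT_interv (fun t => - f t) x y) as [z [Hz Hz0]].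
    + intros z Hz. apply continuity_pt_opp. now apply Hc.
    + exact Hxy.
    + lra.
    + lra.
    + apply (Hn z Hz). lra.
  - assert (0 < f x) by lra. assert (0 < f y) by lra. nra.
Qed.

Lemma sign_const2 (f : R -> R) a b x y : a < x < b -> a < y < b ->
  (forall z, a < z < b -> continuity_pt f z) ->
  (forall z, a < z < b -> f z <> 0) -> f x * f y > 0.
Proof.
  intros Hx Hy Hc Hn.
  destruct (Rtotal_order x y) as [H|[H|H]].
  - apply sign_const; auto; intros z Hz; [apply Hc|apply Hn]; lra.
  - subst. assert (f y <> 0) by (apply Hn; lra).
    assert (0 < f y * f y) by (apply Rsqr_pos_lt; auto). lra.
  - rewrite Rmult_comm. apply sign_const; auto; intros z Hz; [apply Hc|apply Hn]; lra.
Qed.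

Lemma vec3_eq (u w : vec3) : vx u = vx w -> vy u = vy w -> vz u = vz w -> u = w.
Proof. destruct u, w; simpl; intros; subst; reflexivity. Qed.

Lemma gram (v n x : vec3) :
  (dot v (cross n x))^2 =
  dot v v * (dot n n * dot x x - dot n x ^ 2)
  - dot v n * (dot v n * dot x x - dot n x * dot v x)
  + dot v x * (dot v n * dot n x - dot n n * dot v x).
Proof. destruct v, n, x; unfold dot, cross; simpl; ring. Qed.

Lemma decomp (d xi nu : vec3) :
  dot xi xi = 1 -> dot nu nu = 1 -> dot xi nu = 0 ->
  d = vadd (vadd (vscal (dot d xi) xi) (vscal (dot d (cross nu xi)) (cross nu xi)))
           (vscal (dot d nu) nu).
Proof.
  intros H1 H2 H3.
  set (m := cross nu xi).
  set (w := vadd (vadd (vscal (dot d xi) xi) (vscal (dot d m) m)) (vscal (dot d nu) nu)).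
  set (v := V3 (vx d - vx w) (vy d - vy w) (vz d - vz w)).
  assert (L : forall x, dot v x = dot d x - (dot d xi * dot xi x + dot d m * dot m x + dot d nu * dot nu x)).
  { intro x. unfold v, w. destruct d, xi, nu, x, m; unfold dot, vadd, vscal; simpl. ring. }
  assert (Mx : dot m xi = 0) by (unfold m; destruct xi, nu; unfold dot, cross; simpl; ring).
  assert (Mn : dot m nu = 0) by (unfold m; destruct xi, nu; unfold dot, cross; simpl; ring).
  assert (Mm : dot m m = dot nu nu * dot xi xi - dot nu xi ^ 2)
    by (unfold m; destruct xi, nu; unfold dot, cross; simpl; ring).
  assert (S : forall u w, dot u w = dot w u) by (intros [] []; unfold dot; simpl; ring).
  assert (Ex : dot v xi = 0).
  { rewrite L, Mx, (S nu xi), H3. rewrite H1. ring. }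
  assert (En : dot v nu = 0).
  { rewrite L, Mn, H3, H2. ring. }
  assert (Em : dot v m = 0).
  { rewrite L, Mm, (S nu xi), H3, H1, H2, (S xi m), Mx, (S nu m), Mn. ring. }
  assert (Ev : dot v v = 0).
  { pose proof (gram v nu xi) as G. fold m in G. rewrite Em, Ex, En, H1, H2, (S nu xi), H3 in G.
    nra. }
  clearbody w. unfold v, dot in Ev; cbn [vx vy vz] in Ev.
  set (p := vx d - vx w) in Ev. set (q := vy d - vy w) in Ev. set (r := vz d - vz w) in Ev.
  assert (p = 0) by nra. assert (q = 0) by nra. assert (r = 0) by nra.
  apply vec3_eq; unfold p, q, r in *; lra.
Qed.

Lemma dot_sym u w : dot u w = dot w u.
Proof. destruct u, w; unfold dot; simpl; ring. Qed.

Lemma dot_lin d p q r x y z :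
  dot d (vadd (vadd (vscal p x) (vscal q y)) (vscal r z)) = p * dot d x + q * dot d y + r * dot d z.
Proof. destruct d, x, y, z; unfold dot, vadd, vscal; simpl; ring. Qed.

Lemma dot_lin2 p q y z d :
  dot (vadd (vscal p y) (vscal q z)) d = p * dot y d + q * dot z d.
Proof. destruct d, y, z; unfold dot, vadd, vscal; simpl; ring. Qed.

Theorem corollary7 (a b : R) (xi mu nu : R -> vec3) (G K T : R -> R)
  (d : vec3) (theta : R) :
  a < b ->
  darboux_frame a b xi mu nu G K T ->
  (forall s, a < s < b -> ~ (G s = 0 /\ K s = 0)) ->
  xi_helix a b xi d theta ->
  exists eps : R, (eps = 1 \/ eps = -1) /\
    forall s, a < s < b ->
      d = vadd (vadd (vscal (cos theta) (xi s))
                     (vscal (- eps * sin theta * (K s / sqrt (G s ^ 2 + K s ^ 2))) (mu s)))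
               (vscal (eps * sin theta * (G s / sqrt (G s ^ 2 + K s ^ 2))) (nu s)).
Proof.
  intros Hab [Sxi [Smu [Snu [SG [SK [ST [Hfr Hder]]]]]]] Hnz [Hdd Hhel].
  set (al := fun s => dot (mu s) d).
  set (be := fun s => dot (nu s) d).
  assert (A : forall s, a < s < b ->
    d = vadd (vadd (vscal (cos theta) (xi s)) (vscal (al s) (mu s))) (vscal (be s) (nu s))).
  { intros s Hs. destruct (Hfr s Hs) as [H1 [H2 [H3 H4]]].
    rewrite (decomp d (xi s) (nu s) H1 H2 H3) at 1. rewrite <- H4.
    unfold al, be. rewrite (dot_sym d (xi s)), Hhel by exact Hs.
    rewrite (dot_sym d (mu s)), (dot_sym d (nu s)). reflexivity. }
  assert (B : forall s, a < s < b -> al s ^ 2 + be s ^ 2 = sin theta ^ 2).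
  { intros s Hs. pose proof Hdd as E. rewrite (A s Hs) in E at 2.
    rewrite dot_lin in E.
    rewrite (dot_sym d (xi s)), Hhel in E by exact Hs.
    rewrite (dot_sym d (mu s)), (dot_sym d (nu s)) in E. fold (al s) (be s) in E.
    pose proof (sin2_cos2 theta) as SC. unfold Rsqr in SC. nra. }
  assert (C : forall s, a < s < b -> G s * al s + K s * be s = 0).
  { intros s Hs. destruct (Hder s Hs) as [Dxi _].
    pose proof (der_dot _ _ _ d Dxi) as D. rewrite dot_lin2 in D.
    assert (D2 : is_derive (fun _ => cos theta) s (G s * dot (mu s) d + K s * dot (nu s) d)).
    { apply (is_derive_ext_loc (fun t => dot (xi t) d)); [|exact D].
      assert (O : open (fun u : R => a < u /\ u < b))
        by (apply open_and; [apply open_gt|apply open_lt]).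
      apply (filter_imp (fun u : R => a < u /\ u < b)).
      - intros t Ht. apply Hhel. exact Ht.
      - apply O. exact Hs. }
    apply is_derive_unique in D2. rewrite Derive_const in D2. unfold al, be. lra. }
  set (f := fun s => - K s * al s + G s * be s).
  assert (F2 : forall s, a < s < b -> f s ^ 2 = (G s ^ 2 + K s ^ 2) * sin theta ^ 2).
  { intros s Hs. rewrite <- (B s Hs). pose proof (C s Hs) as H.
    assert (E : f s ^ 2 - (G s ^ 2 + K s ^ 2) * (al s ^ 2 + be s ^ 2) = - (G s * al s + K s * be s) ^ 2) by (unfold f; ring).
    rewrite H in E. lra. }
  assert (Fal : forall s, a < s < b -> (G s ^ 2 + K s ^ 2) * al s = - K s * f s).
  { intros s Hs. pose proof (C s Hs) as H.
    assert (E : (G s^2+K s^2)*al s - (-K s * f s) = G s * (G s * al s + K s * be s)) by (unfold f; ring).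
    rewrite H in E. lra. }
  assert (Fbe : forall s, a < s < b -> (G s ^ 2 + K s ^ 2) * be s = G s * f s).
  { intros s Hs. pose proof (C s Hs) as H.
    assert (E : (G s^2+K s^2)*be s - (G s * f s) = K s * (G s * al s + K s * be s)) by (unfold f; ring).
    rewrite H in E. lra. }
  assert (Npos : forall s, a < s < b -> 0 < G s ^ 2 + K s ^ 2).
  { intros s Hs. pose proof (Hnz s Hs).
    destruct (Req_dec (G s) 0); destruct (Req_dec (K s) 0); try tauto.
    - assert (0 < K s * K s) by (apply Rsqr_pos_lt; auto). nra.
    - assert (0 < G s * G s) by (apply Rsqr_pos_lt; auto). nra.
    - assert (0 < G s * G s) by (apply Rsqr_pos_lt; auto). nra. }
  destruct (Req_dec (sin theta) 0) as [S0|S0].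
  - exists 1. split; [left; reflexivity|]. intros s Hs.
    pose proof (B s Hs) as Bs. rewrite S0 in Bs.
    assert (al s = 0) by nra. assert (be s = 0) by nra.
    rewrite (A s Hs) at 1. rewrite S0. f_equal; [f_equal|]; f_equal; lra.
  - set (s0 := (a + b) / 2).
    assert (Hs0 : a < s0 < b) by (unfold s0; lra).
    set (eps := if Rlt_dec 0 (f s0 * sin theta) then 1 else -1).
    assert (Heps : eps = 1 \/ eps = -1) by (unfold eps; destruct Rlt_dec; auto).
    exists eps. split; [exact Heps|]. intros s Hs.
    assert (Fc : forall z, a < z < b -> continuity_pt f z).
    { intros z Hz. unfold f. apply continuity_pt_plus; apply continuity_pt_mult.
      - apply continuity_pt_opp. exact (sm_cont a b K z SK Hz).
      - destruct (Hder z Hz) as [_ [Dmu _]]. exact (der_cont _ _ _ (der_dot _ _ _ d Dmu)).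
      - exact (sm_cont a b G z SG Hz).
      - destruct (Hder z Hz) as [_ [_ Dnu]]. exact (der_cont _ _ _ (der_dot _ _ _ d Dnu)). }
    assert (Fn : forall z, a < z < b -> f z <> 0).
    { intros z Hz E. pose proof (F2 z Hz) as F. rewrite E in F. pose proof (Npos z Hz).
      assert (0 < sin theta * sin theta) by (apply Rsqr_pos_lt; auto). nra. }
    pose proof (sign_const2 f a b s s0 Hs Hs0 Fc Fn) as Sg.
    set (N := sqrt (G s ^ 2 + K s ^ 2)).
    assert (NN : N * N = G s ^ 2 + K s ^ 2) by (apply sqrt_sqrt; pose proof (Npos s Hs); lra).
    assert (Np : 0 < N) by (apply sqrt_lt_R0; apply Npos; exact Hs).
    assert (Hf : f s = eps * sin theta * N).
    { pose proof (F2 s Hs) as F. rewrite <- NN in F.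
      assert (Fs : (f s - sin theta * N) * (f s + sin theta * N) = 0) by nra.
      assert (0 < sin theta * sin theta) by (apply Rsqr_pos_lt; auto).
      unfold eps; destruct Rlt_dec as [P|P].
      - apply Rmult_integral in Fs as [Fs|Fs]; [lra|].
        exfalso. assert (f s * sin theta < 0) by nra.
        assert (f s * sin theta * (f s0 * sin theta) < 0) by nra. nra.
      - apply Rnot_lt_le in P.
        apply Rmult_integral in Fs as [Fs|Fs]; [|lra].
        exfalso. assert (f s * sin theta > 0) by nra.
        assert (f s * sin theta * (f s0 * sin theta) <= 0) by nra. nra. }
    rewrite (A s Hs) at 1. fold N.
    assert (Ha : al s = - eps * sin theta * (K s / N)).
    { pose proof (Fal s Hs) as E. rewrite <- NN, Hf in E. field_simplify_eq; [|lra].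
      apply (Rmult_eq_reg_l N); [|lra]. nra. }
    assert (Hb : be s = eps * sin theta * (G s / N)).
    { pose proof (Fbe s Hs) as E. rewrite <- NN, Hf in E. field_simplify_eq; [|lra].
      apply (Rmult_eq_reg_l N); [|lra]. nra. }
    rewrite Ha, Hb. reflexivity.
Qed.
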